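(* Let $c\in\mathcal{C}$ and suppose there exist $0\le\theta_1<\theta_2<2\pi$ with $c(\theta_1)=c(\theta_2)$. Then there exist $\theta,\tilde\theta\in[\theta_1,\theta_2]$ (at which $c'$ exists and is nonzero) such that $|\mathrm{angle}(c'(\theta))-\mathrm{angle}(c'(\tilde\theta))|\ge\pi$, with strict inequality unless $c([\theta_1,\theta_2])$ is a segment.
   Context: The plane is identified with $\mathbb{C}$, and $\mathbb{S}^1$ with $[0,2\pi)$. $\mathcal{C}$ denotes the set of Lipschitz maps $c:\mathbb{S}^1\to\mathbb{C}$ with $c'(\theta)\neq 0$ for a.e. $\theta$. For $z\in\mathbb{C}\setminus\{0\}$, $\mathrm{angle}(z)\in[0,2\pi)$ denotes the argument of $z$. *)

(* Defs.v *)
From mathcomp Require Import all_boot all_order all_algebra.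
From mathcomp Require Import all_classical all_reals all_analysis.
Set Implicit Arguments. Unset Strict Implicit. Unset Printing Implicit Defensive.
Import Order.TTheory GRing.Theory Num.Theory.
Local Open Scope ring_scope.
Local Open Scope classical_set_scope.

(* The plane C, identified with R x R (real part, imaginary part). *)
Definition Plane (R : realType) := (R^o * R^o)%type.

(* S^1 is identified with [0, 2pi); a map S^1 -> C is represented by a
   2pi-periodic map R -> C. *)
Definition periodic2pi (R : realType) (c : R -> Plane R) : Prop :=
  forall t : R, c (t + 2 * pi) = c t.

(* The class \mathcal{C}: Lipschitz maps S^1 -> C whose derivative exists
   and is nonzero for a.e. theta in [0, 2pi). *)
Definition in_curve_class (R : realType) (c : R -> Plane R) : Prop :=
  [/\ periodic2pi c,
      (exists k : R, forall s t : R, `|c s - c t| <= k * `|s - t|) &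
      (@lebesgue_measure R).-negligible
        [set t : R | 0 <= t < 2 * pi /\ ~ (derivable c t 1 /\ 'D_1 c t != 0)]].

(* angle z in [0, 2pi): the argument of z = (x, y) <> 0. *)
Definition angle (R : realType) (z : Plane R) : R :=
  let r := Num.sqrt (z.1 ^+ 2 + z.2 ^+ 2) in
  if 0 <= z.2 then acos (z.1 / r) else 2 * pi - acos (z.1 / r).

Definition is_segment (R : realType) (S : set (Plane R)) : Prop :=
  exists a b : Plane R, S = [set a + t *: (b - a) | t in `[0, 1]%classic].

(* Main.v *)
Require Import Defs.
From mathcomp Require Import all_boot all_order all_algebra.
From mathcomp Require Import all_classical all_reals all_analysis.
From mathcomp Require Import ring lra.
Import Order.TTheory GRing.Theory Num.Theory.
Local Open Scope ring_scope.
Local Open Scope classical_set_scope.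
From mathcomp Require Import measurable_realfun.
Lemma my_dcomp (R : realType) (c : R -> Plane R) (t u1 u2 : R) :
  derivable c t 1 ->
  derivable (fun x => u1 * (c x).1 + u2 * (c x).2) t 1 /\
  'D_1 (fun x => u1 * (c x).1 + u2 * (c x).2) t = u1 * ('D_1 c t).1 + u2 * ('D_1 c t).2.
Proof.
move=> dc.
set f := (fun x => u1 * (c x).1 + u2 * (c x).2).
pose q := (fun h : R => h^-1 *: ((c \o shift t) (h *: (1:R)) - c t)).
have Hq : q @ 0^' --> 'D_1 c t by exact: dc.
have H1 : (fun h => (q h).1) @ 0^' --> ('D_1 c t).1.
  apply: (cvg_comp _ _ Hq). apply: cvg_fst.
have H2 : (fun h => (q h).2) @ 0^' --> ('D_1 c t).2.
  apply: (cvg_comp _ _ Hq). apply: cvg_snd.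
have H : (fun h : R => h^-1 *: ((f \o shift t) (h *: (1:R)) - f t)) @ 0^' --> u1 * ('D_1 c t).1 + u2 * ('D_1 c t).2.
  have -> : (fun h : R => h^-1 *: ((f \o shift t) (h *: (1:R)) - f t)) = (fun h => u1 * (q h).1 + u2 * (q h).2).
    apply: funext => h /=. rewrite /f /q /=. rewrite /GRing.scale /=. ring.
  apply: cvgD; apply: cvgMr; [exact: H1|exact: H2].
split.
  exact: (cvgP _ H).
exact: (cvg_lim _ H).
Qed.
Lemma img_null (R : realType) (f : R -> R) (K : R) (N : set R) (p q : R) :
  (forall s t, `|f s - f t| <= K * `|s - t|) ->
  (@lebesgue_measure R).-negligible N -> p < q -> ~ (`]p, q[ `<=` f @` N).
Proof.
move=> fL /negligible_outer_measure N0 pq sub.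
pose K' := `|K| + 1.
have K'0 : 0 < K' by rewrite /K'; have := normr_ge0 K; lra.
have fL' : forall s t, `|f s - f t| <= K' * `|s - t|.
  move=> s t; apply: (le_trans (fL s t)); apply: ler_wpM2r; first exact: normr_ge0.
  by rewrite /K'; have := ler_norm K; lra.
pose e := (q - p) / (4 * K').
have e0 : 0 < e by apply: divr_gt0; lra.
have : (ereal_inf [set \sum_(0 <= k <oo) wlength idfun (F k) | F in open_itv_cover N] < e%:E)%E.
  by rewrite -outer_measure_open_itv_cover N0 lte_fin.
move=> /ereal_inf_lt [_ [F [Fitv NF] <-]] Fe.
pose a k := (sval (cid (Fitv k))).1.
pose b k := (sval (cid (Fitv k))).2.
have Fk k : F k = `]a k, b k[ := svalP (cid (Fitv k)).
pose d k := Num.max (b k - a k) 0.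
pose J k := `[f (a k) - K' * d k, f (a k) + K' * d k]%classic.
have d0 k : 0 <= d k by rewrite /d le_max lexx orbT.
have lF k : wlength idfun (F k) = (d k)%:E.
  rewrite Fk wlength_itv /= lte_fin /d; case: ifP => ab.
    by rewrite /= max_l // subr_ge0 ltW.
  by rewrite max_r // subr_le0 leNgt ab.
have mJ k : lebesgue_measure (J k) = ((2 * K') * d k)%:E.
  rewrite lebesgue_measure_itv /= lte_fin; case: ifP => h.
    by rewrite -EFinD; congr (_%:E); ring.
  have : d k = 0.
    apply/eqP; rewrite eq_le d0 andbT; move/negbT: h; rewrite -leNgt => h.
    have : K' * d k <= 0 by lra.
    by rewrite pmulr_rle0.
  by move=> ->; rewrite mulr0.
have sJ : `]p,q[ `<=` \bigcup_k J k.
  move=> y /sub [x Nx <-]; have [k _ Fx] := NF x Nx.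
  exists k => //; move: Fx; rewrite Fk /J /= !in_itv /= => /andP[ax xb].
  have h := fL' x (a k).
  have h2 : `|x - a k| <= d k.
    rewrite ger0_norm; last by lra.
    have : b k - a k <= d k by rewrite /d le_max lexx.
    lra.
  have h3 : `|f x - f (a k)| <= K' * d k by apply: (le_trans h); rewrite ler_pM2l.
  by move: h3; rewrite ler_norml => /andP[h4 h5]; apply/andP; split; lra.
have : (lebesgue_measure (`]p,q[%classic : set R) <= \sum_(0 <= k <oo) lebesgue_measure (J k))%E.
  apply: (@measure_sigma_subadditive _ _ (measurableTypeR R) (@lebesgue_measure R)) => //.
  move=> k; exact: measurable_itv.
have mpq : lebesgue_measure (`]p,q[%classic : set R) = (q-p)%:E.
  by rewrite lebesgue_measure_itv /= lte_fin pq -EFinD.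
move=> h0.
have : ((q-p)%:E <= \sum_(0 <= k <oo) lebesgue_measure (J k))%E.
  by rewrite -mpq; exact: h0.
clear h0.
rewrite (eq_eseriesr (fun k _ => mJ k)).
under eq_eseriesr do rewrite EFinM.
rewrite nneseriesZl; last by move=> i _; rewrite lee_fin.
move=> h.
have : ((q - p)%:E <= (2 * K')%:E * e%:E)%E.
  apply: (le_trans h); apply: lee_wpmul2l; first by rewrite lee_fin; lra.
  apply: ltW; apply: le_lt_trans Fe; rewrite le_eqVlt; apply/orP; left; apply/eqP.
  by apply: eq_eseriesr => k _; rewrite lF.
rewrite -EFinM lee_fin /e.
have -> : 2 * K' * ((q - p) / (4 * K')) = (q - p) / 2.
  by clearbody K'; field; rewrite gt_eqF.
lra.
Qed.
Lemma pos_deriv (R : realType) (f : R -> R) (t : R) :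
  derivable f t 1 -> 0 < 'D_1 f t -> forall e, 0 < e -> exists h, 0 < h < e /\ f t < f (t + h).
Proof.
move=> df D0 e e0.
pose q := (fun h : R => h^-1 *: ((f \o shift t) (h *: (1:R)) - f t)).
have Hq : q @ 0^' --> 'D_1 f t by exact: df.
have H : \forall h \near 0^', 0 < q h by exact: cvgr_gt Hq _ D0.
move: H; rewrite near_withinE => /nbhs_ballP[d /= d0 Hd].
pose h := Num.min d e / 2.
have h0 : 0 < h by rewrite /h divr_gt0 // lt_min d0 e0.
have m1 : Num.min d e <= d by rewrite ge_min lexx.
have m2 : Num.min d e <= e by rewrite ge_min lexx orbT.
have hd : h < d by rewrite /h; lra.
have he : h < e by rewrite /h; lra.
exists h; split; first by rewrite h0 he.
have := Hd h; rewrite /ball /= sub0r normrN gtr0_norm // => /(_ hd (lt0r_neq0 h0)).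
rewrite /q /= /shift /= /GRing.scale /= mulr1 (addrC h) pmulr_rgt0 ?invr_gt0 //.
by rewrite subr_gt0.
Qed.
Lemma lipK (R : realType) (f : R -> R) (K : R) :
  (forall s t, `|f s - f t| <= K * `|s - t|) ->
  exists2 K', 0 < K' & forall s t, `|f s - f t| <= K' * `|s - t|.
Proof.
move=> fL; exists (`|K| + 1); first by have := normr_ge0 K; lra.
move=> s t; apply: (le_trans (fL s t)); apply: ler_wpM2r; first exact: normr_ge0.
by have := ler_norm K; lra.
Qed.

Lemma no_drop (R : realType) (f : R -> R) (K : R) (N : set R) (a b x y : R) :
  (forall s t, `|f s - f t| <= K * `|s - t|) ->
  (@lebesgue_measure R).-negligible N ->
  (forall t, a < t < b -> ~ N t -> derivable f t 1 /\ 0 < 'D_1 f t) ->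
  a <= x -> x < y -> y <= b -> f x <= f y.
Proof.
move=> fL nN fD ax xy yb.
rewrite leNgt; apply/negP => yx.
apply: (img_null _ _ _ _ _ _ fL nN yx) => v /=; rewrite in_itv /= => /andP[v1 v2].
have [K' K'0 fL'] := lipK _ _ _ fL.
pose S := [set t | x <= t <= y /\ v <= f t].
have Sx : S x by split; [rewrite lexx ltW | exact: ltW].
have ubS : ubound S y by move=> t [/andP[]].
have hS : has_sup S by split; [exists x | exists y].
pose s := sup S.
have supS : ubound S s := ub_le_sup hS.2.
have xs : x <= s := supS x Sx.
have sy : s <= y := ge_sup (ex_intro _ x Sx) ubS.
have fsv1 : v <= f s.
  rewrite leNgt; apply/negP => fs.
  pose dl := (v - f s) / K'.
  have dl0 : 0 < dl by rewrite /dl divr_gt0 // subr_gt0.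
  have [t [tin vt] st] := sup_adherent dl0 hS.
  have ts : t <= s := supS t (conj tin vt).
  have h1 : f t - f s <= K' * (s - t).
    apply: le_trans (ler_norm _) _; apply: le_trans (fL' t s) _.
    by rewrite ler0_norm ?subr_le0 // opprB.
  have h2 : K' * (s - t) < K' * dl by rewrite ltr_pM2l //; rewrite /s; lra.
  have h3 : K' * dl = v - f s by rewrite /dl mulrC -mulrA mulVf ?mulr1 // gt_eqF.
  lra.
have fsv2 : f s <= v.
  rewrite leNgt; apply/negP => fs.
  have sy' : s < y by rewrite lt_neqAle sy andbT; apply/eqP => sy'; move: fs; rewrite sy'; lra.
  pose dl := (f s - v) / K'.
  have dl0 : 0 < dl by rewrite /dl divr_gt0 // subr_gt0.
  pose t := Num.min y (s + dl / 2).
  have t1 : t <= y by rewrite /t ge_min lexx.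
  have t2 : t <= s + dl / 2 by rewrite /t ge_min lexx orbT.
  have t3 : s < t by rewrite /t lt_min sy' /=; lra.
  have h1 : f s - f t <= K' * (t - s).
    apply: le_trans (ler_norm _) _; apply: le_trans (fL' s t) _.
    by rewrite distrC ger0_norm ?subr_ge0 // ltW.
  have h2 : K' * (t - s) < K' * dl by rewrite ltr_pM2l //; lra.
  have h3 : K' * dl = f s - v by rewrite /dl mulrC -mulrA mulVf ?mulr1 // gt_eqF.
  have St : S t by split; [apply/andP; split; lra | lra].
  have := supS t St; lra.
have fsv : f s = v by apply/eqP; rewrite eq_le fsv1 fsv2.
have xs' : x < s by rewrite lt_neqAle xs andbT; apply/eqP => e; move: fsv; rewrite -e; lra.
have sy' : s < y by rewrite lt_neqAle sy andbT; apply/eqP => e; move: fsv; rewrite e; lra.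
exists s => //.
apply/not_notP => Ns.
have [ds Ds] := fD s (ltac:(apply/andP; split; lra)) Ns.
have [h [/andP[h0 hy]] fsh] := pos_deriv _ _ _ ds Ds (y - s) (ltac:(lra)).
have nS : ~ S (s + h) by move=> /supS; lra.
apply: nS; split; [apply/andP; split; lra | lra].
Qed.
Lemma lin_der (R : realType) (e t : R) : derivable (fun z : R => e * z) t 1 /\ 'D_1 (fun z : R => e * z) t = e.
Proof.
have h : is_derive t (1:R) (fun z : R => e * z) (e * 1) by apply: is_deriveZ.
by case: h => dh vh; split => //; rewrite vh mulr1.
Qed.

Lemma nondecr (R : realType) (f : R -> R) (K : R) (N : set R) (a b x y : R) :
  (forall s t, `|f s - f t| <= K * `|s - t|) ->
  (@lebesgue_measure R).-negligible N ->
  (forall t, a < t < b -> ~ N t -> derivable f t 1 /\ 0 <= 'D_1 f t) ->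
  a <= x -> x <= y -> y <= b -> f x <= f y.
Proof.
move=> fL nN fD ax xy yb.
case: (eqVneq x y) => [-> //|nxy].
have {}xy : x < y by rewrite lt_neqAle nxy xy.
rewrite leNgt; apply/negP => yx.
pose e := (f x - f y) / (2 * (y - x)).
have e0 : 0 < e by rewrite /e divr_gt0 //; lra.
pose g := f + (fun z : R => e * z).
have [K' K'0 fL'] := lipK _ _ _ fL.
have gL : forall s t, `|g s - g t| <= (K' + e) * `|s - t|.
  move=> s t; rewrite /g /=.
  have -> : f s + e * s - (f t + e * t) = (f s - f t) + e * (s - t) by ring.
  apply: le_trans (ler_normD _ _) _; rewrite normrM (gtr0_norm e0) mulrDl.
  by apply: lerD => //; exact: fL'.
have gD : forall t, a < t < b -> ~ N t -> derivable g t 1 /\ 0 < 'D_1 g t.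
  move=> t tab Nt; have [df D0] := fD t tab Nt.
  have [dl Dl] := lin_der _ e t.
  split; first exact: derivableD.
  by rewrite deriveD // Dl; lra.
have := no_drop _ _ _ _ _ _ _ _ gL nN gD ax xy yb.
rewrite /g /=.
have : e * (y - x) = (f x - f y) / 2.
  by rewrite /e; field; lra.
move=> h1 h2; have h3 : f x + e * x <= f y + e * y := h2; rewrite mulrBr in h1; lra.
Qed.

Lemma exists_good (R : realType) (N : set R) (a b : R) :
  (@lebesgue_measure R).-negligible N -> a < b -> exists t, a < t < b /\ ~ N t.
Proof.
move=> nN ab; apply/not_existsP => H.
have L : forall s t : R, `|id s - id t| <= 1 * `|s - t| by move=> s t; rewrite mul1r.
apply: (img_null _ _ _ _ _ _ L nN ab) => t /=; rewrite in_itv /= => tab.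
exists t => //; apply/not_notP => Nt; apply: (H t); split => //.
Qed.

Lemma incr (R : realType) (f : R -> R) (K : R) (N : set R) (a b : R) :
  (forall s t, `|f s - f t| <= K * `|s - t|) ->
  (@lebesgue_measure R).-negligible N -> a < b ->
  (forall t, a < t < b -> ~ N t -> derivable f t 1 /\ 0 < 'D_1 f t) ->
  f a < f b.
Proof.
move=> fL nN ab fD.
have [t [/andP[ta tb] Nt]] := exists_good _ _ _ _ nN ab.
have [dt Dt] := fD t (ltac:(apply/andP; split => //)) Nt.
have [h [/andP[h0 hb]] fth] := pos_deriv _ _ _ dt Dt (b - t) (ltac:(lra)).
have h1 := no_drop _ _ _ _ _ _ _ _ fL nN fD (lexx a) ta (ltW tb).
have h2 := no_drop _ _ _ _ _ _ (t + h) b fL nN fD (ltac:(lra)) (ltac:(lra)) (lexx b).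
lra.
Qed.
Lemma angleP (R : realType) (z : Plane R) : z != 0 ->
  0 < Num.sqrt (z.1 ^+ 2 + z.2 ^+ 2) /\
  z.1 = Num.sqrt (z.1 ^+ 2 + z.2 ^+ 2) * cos (angle z) /\
  z.2 = Num.sqrt (z.1 ^+ 2 + z.2 ^+ 2) * sin (angle z) /\
  0 <= angle z < 2 * pi.
Proof.
case: z => x y /= nz.
have s0 : 0 < x ^+ 2 + y ^+ 2.
  rewrite lt_neqAle addr_ge0 ?sqr_ge0 // andbT eq_sym.
  rewrite paddr_eq0 ?sqr_ge0 // !expf_eq0 /=.
  apply/negP => /andP[/eqP x0 /eqP y0]; move: nz; rewrite x0 y0.
  by rewrite eqxx.
set r := Num.sqrt _.
have r0 : 0 < r by rewrite /r sqrtr_gt0.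
have r2 : r ^+ 2 = x ^+ 2 + y ^+ 2 by rewrite /r sqr_sqrtr // ltW.
have rn0 : r != 0 by rewrite gt_eqF.
pose cc := x / r.
have cc2 : cc ^+ 2 <= 1.
  rewrite /cc expr_div_n r2 ler_pdivrMr // mul1r lerDl sqr_ge0 //.
have ccb : -1 <= cc <= 1 by apply/andP; split; nra.
have [/andP[a0 api] ca] := acos_def ccb.
have sa : sin (acos cc) = `|y| / r.
  rewrite sin_acos //.
  have -> : 1 - cc ^+ 2 = (`|y| / r) ^+ 2.
    rewrite !expr_div_n real_normK ?num_real // r2.
    by field; rewrite -r2 expf_neq0.
  by rewrite sqrtr_sqr ger0_norm // divr_ge0 // ltW.
have pi0 := pi_gt0 R.
rewrite /angle /= -/r.
case: ifP => y0.
  rewrite ca sa ger0_norm //; split => //; split; first by rewrite /cc; field.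
  split; first by field.
  by rewrite a0 /=; lra.
have yn : y < 0 by rewrite ltNge y0.
have h2pi : (2 : R) * pi = pi *+ 2 :> R by rewrite mulr2n; lra.
rewrite cosB sinB h2pi cos2pi sin2pi ca sa ltr0_norm //.
split => //; split; first by rewrite /cc; field.
split; first by field.
have ap : 0 < acos cc.
  rewrite lt_neqAle a0 andbT; apply/eqP => e; move: sa; rewrite -e sin0.
  move=> /esym /eqP; rewrite mulf_eq0 invr_eq0 (negbTE rn0) orbF normr_eq0 => /eqP y00.
  by move: yn; rewrite y00 ltxx.
by rewrite -h2pi; apply/andP; split; lra.
Qed.
Module Aux.
Import numFieldNormedType.Exports.
Lemma lipc (R : realType) (c : R -> Plane R) (k u1 u2 : R) :
  (forall s t, `|c s - c t| <= k * `|s - t|) ->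
  forall s t, `|(u1 * (c s).1 + u2 * (c s).2) - (u1 * (c t).1 + u2 * (c t).2)|
    <= ((`|u1| + `|u2|) * k) * `|s - t|.
Proof.
move=> ck s t.
have e : u1 * (c s).1 + u2 * (c s).2 - (u1 * (c t).1 + u2 * (c t).2)
  = u1 * (c s - c t).1 + u2 * (c s - c t).2 by rewrite /=; ring.
rewrite e; apply: le_trans (ler_normD _ _) _; rewrite !normrM.
have n1 : `|(c s - c t).1| <= `|c s - c t| by rewrite prod_normE le_max lexx.
have n2 : `|(c s - c t).2| <= `|c s - c t| by rewrite prod_normE le_max lexx orbT.
have := ck s t; have := normr_ge0 u1; have := normr_ge0 u2.
have := normr_ge0 (c s - c t); have := normr_ge0 (s - t).
rewrite -mulrA mulrDl.
move=> h1 h2 h3 h4 h5.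
apply: lerD.
  apply: le_trans (ler_wpM2l h4 n1) _; exact: ler_wpM2l.
apply: le_trans (ler_wpM2l h3 n2) _; exact: ler_wpM2l.
Qed.

Lemma lip_cont (R : realType) (f : R -> R) (K : R) :
  (forall s t, `|f s - f t| <= K * `|s - t|) -> forall x : R, f z @[z --> x] --> f x.
Proof.
move=> fL.
have [K' K'0 fL'] : exists2 K', 0 < K' & forall s t, `|f s - f t| <= K' * `|s - t|.
  exists (`|K| + 1); first by have := normr_ge0 K; lra.
  move=> s t; apply: (le_trans (fL s t)); apply: ler_wpM2r; first exact: normr_ge0.
  by have := ler_norm K; lra.
move=> x; apply/cvgrPdist_lt => e e0.
apply/nbhs_ballP; exists (e / K'); first by rewrite /= divr_gt0.
move=> y; rewrite /ball /= => xy.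
apply: le_lt_trans (fL' x y) _.
by rewrite -ltr_pdivlMl // mulrC.
Qed.

Lemma rot0 (R : realType) (cp sp w1 w2 : R) : cp ^+ 2 + sp ^+ 2 = 1 ->
  cp * w1 + sp * w2 = 0 -> - sp * w1 + cp * w2 = 0 -> w1 = 0 /\ w2 = 0.
Proof.
move=> h h1 h2.
have e1 : w1 * (cp ^+ 2 + sp ^+ 2) = cp * (cp * w1 + sp * w2) - sp * (- sp * w1 + cp * w2) by ring.
have e2 : w2 * (cp ^+ 2 + sp ^+ 2) = sp * (cp * w1 + sp * w2) + cp * (- sp * w1 + cp * w2) by ring.
rewrite h mulr1 h1 h2 in e1; rewrite h mulr1 h1 h2 in e2.
by split; [rewrite e1 | rewrite e2]; ring.
Qed.

Lemma peq_rot (R : realType) (p q : Plane R) (phi : R) :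
  cos phi * p.1 + sin phi * p.2 = cos phi * q.1 + sin phi * q.2 ->
  - sin phi * p.1 + cos phi * p.2 = - sin phi * q.1 + cos phi * q.2 -> p = q.
Proof.
case: p => p1 p2; case: q => q1 q2 /= h1 h2.
have e1 : cos phi * (p1 - q1) + sin phi * (p2 - q2) = 0.
  have -> : cos phi * (p1 - q1) + sin phi * (p2 - q2) = (cos phi * p1 + sin phi * p2) - (cos phi * q1 + sin phi * q2) by ring.
  by rewrite h1 subrr.
have e2 : - sin phi * (p1 - q1) + cos phi * (p2 - q2) = 0.
  have -> : - sin phi * (p1 - q1) + cos phi * (p2 - q2) = (- sin phi * p1 + cos phi * p2) - (- sin phi * q1 + cos phi * q2) by ring.
  by rewrite h2 subrr.
have [] := rot0 _ _ _ _ _ (cos2Dsin2 phi) e1 e2.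
by move=> /eqP; rewrite subr_eq0 => /eqP -> /eqP; rewrite subr_eq0 => /eqP ->.
Qed.

Lemma seg (R : realType) (c : R -> Plane R) (k phi f0 a b : R) :
  (forall s t, `|c s - c t| <= k * `|s - t|) -> a <= b ->
  (forall x, a <= x <= b -> cos phi * (c x).1 + sin phi * (c x).2 = f0) ->
  is_segment (c @` `[a, b]).
Proof.
move=> ck ab hf.
pose g x := - sin phi * (c x).1 + cos phi * (c x).2.
have gL := lipc _ _ _ (- sin phi) (cos phi) ck.
have gc : continuous g := lip_cont _ _ _ gL.
have gcw : forall u v : R, {within `[u, v], continuous g}.
  by move=> u v; apply: continuous_subspaceT.
have [s1 s1in g1] := EVT_min ab (gcw a b).
have [s2 s2in g2] := EVT_max ab (gcw a b).
have key : forall x l, a <= x <= b -> g x = g s1 + l * (g s2 - g s1) ->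
    c s1 + l *: (c s2 - c s1) = c x.
  move=> x l xab gx.
  have f1 := hf s1 (ltac:(by move: s1in; rewrite in_itv)).
  have f2 := hf s2 (ltac:(by move: s2in; rewrite in_itv)).
  have fx := hf x xab.
  apply: (peq_rot _ _ _ phi) => /=; rewrite /GRing.scale /=.
    have -> : cos phi * ((c s1).1 + l * ((c s2).1 - (c s1).1)) + sin phi * ((c s1).2 + l * ((c s2).2 - (c s1).2))
       = (cos phi * (c s1).1 + sin phi * (c s1).2) + l * ((cos phi * (c s2).1 + sin phi * (c s2).2) - (cos phi * (c s1).1 + sin phi * (c s1).2)) by ring.
    by rewrite f1 f2 fx subrr mulr0 addr0.
  have -> : - sin phi * ((c s1).1 + l * ((c s2).1 - (c s1).1)) + cos phi * ((c s1).2 + l * ((c s2).2 - (c s1).2))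
     = g s1 + l * (g s2 - g s1) by rewrite /g; ring.
  by rewrite -gx.
exists (c s1), (c s2).
apply/seteqP; split.
- move=> _ [x xin <-].
  have xab : a <= x <= b by move: xin; rewrite /= in_itv.
  have gx1 := g1 x (ltac:(by rewrite in_itv)).
  have gx2 := g2 x (ltac:(by rewrite in_itv)).
  case: (eqVneq (g s1) (g s2)) => e.
    exists 0; first by rewrite /= in_itv /= lexx ler01.
    apply: key => //; rewrite mul0r addr0; apply/eqP; rewrite eq_le gx1 andbT.
    by rewrite e.
  have d0 : 0 < g s2 - g s1 by rewrite subr_gt0 lt_neqAle e /= (le_trans gx1 gx2).
  exists ((g x - g s1) / (g s2 - g s1)).
    rewrite /= in_itv /=; apply/andP; split.
      by apply: divr_ge0; [rewrite subr_ge0 | exact: ltW].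
    by rewrite ler_pdivrMr // mul1r; lra.
  by apply: key => //; field; rewrite gt_eqF.
- move=> _ [l lin <-].
  have l01 : 0 <= l <= 1 by move: lin; rewrite /= in_itv.
  have g12 : g s1 <= g s2 := g1 s2 s2in.
  have [s1ab s2ab] : a <= s1 <= b /\ a <= s2 <= b by move: s1in s2in; rewrite !in_itv.
  have vb : g s1 <= g s1 + l * (g s2 - g s1) <= g s2.
    by apply/andP; split; nra.
  have [x xin gx] : exists2 x, a <= x <= b & g x = g s1 + l * (g s2 - g s1).
    case: (leP s1 s2) => s12.
      have [x xin gx] := @IVT _ g s1 s2 (g s1 + l * (g s2 - g s1)) s12 (gcw s1 s2) (ltac:(by rewrite min_l // max_r)).
      by exists x => //; move: xin; rewrite in_itv /=; lra.
    have s21 := ltW s12.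
    have [x xin gx] := @IVT _ g s2 s1 (g s1 + l * (g s2 - g s1)) s21 (gcw s2 s1) (ltac:(by rewrite min_r // max_l)).
    by exists x => //; move: xin; rewrite in_itv /=; lra.
  exists x; first by rewrite /= in_itv.
  by rewrite (key x l).
Qed.
End Aux.

Lemma bnd_aux (R : realType) (x m p : R) : m - p <= x -> x <= m ->
  - (p / 2) <= x - (m - p / 2) <= p / 2.
Proof. by move=> h1 h2; apply/andP; split; lra. Qed.

Theorem lemma3p1 (R : realType) (c : R -> Plane R) (th1 th2 : R) :
  in_curve_class c ->
  0 <= th1 -> th1 < th2 -> th2 < 2 * pi ->
  c th1 = c th2 ->
  exists th th' : R,
    [/\ th \in `[th1, th2] /\ th' \in `[th1, th2],
        derivable c th 1 /\ 'D_1 c th != 0,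
        derivable c th' 1 /\ 'D_1 c th' != 0,
        pi <= `|angle ('D_1 c th) - angle ('D_1 c th')| &
        (~ is_segment (c @` `[th1, th2]) ->
           pi < `|angle ('D_1 c th) - angle ('D_1 c th')|)].
Proof.
move=> [_ [k ck] nN] th10 th12 th2lt ceq.
pose N0 := [set t : R | 0 <= t < 2 * pi /\ ~ (derivable c t 1 /\ 'D_1 c t != 0)].
have nN0 : (@lebesgue_measure R).-negligible N0 := nN.
have goodD : forall t, th1 < t < th2 -> ~ N0 t -> derivable c t 1 /\ 'D_1 c t != 0.
  move=> t /andP[t1 t2] Nt; apply: contrapT => H; apply: Nt; split => //.
  by apply/andP; split; lra.
pose ang t := angle ('D_1 c t).
pose rr t := Num.sqrt (('D_1 c t).1 ^+ 2 + ('D_1 c t).2 ^+ 2).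
have angP : forall t, th1 < t < th2 -> ~ N0 t ->
    0 < rr t /\ ('D_1 c t).1 = rr t * cos (ang t) /\
    ('D_1 c t).2 = rr t * sin (ang t) /\ 0 <= ang t < 2 * pi.
  by move=> t tI tN; exact: angleP (goodD t tI tN).2.
have inI : forall t, th1 < t < th2 -> t \in `[th1, th2].
  by move=> t /andP[t1 t2]; apply/mem_set; rewrite /= in_itv /= !ltW.
have fder : forall phi t, th1 < t < th2 -> ~ N0 t ->
    derivable (fun x => cos phi * (c x).1 + sin phi * (c x).2) t 1 /\
    'D_1 (fun x => cos phi * (c x).1 + sin phi * (c x).2) t = rr t * cos (ang t - phi).
  move=> phi t tI tN.
  have [dc Dc] := my_dcomp _ c t (cos phi) (sin phi) (goodD t tI tN).1.
  split => //; rewrite Dc.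
  have [_ [e1 [e2 _]]] := angP t tI tN.
  by rewrite e1 e2 cosB; ring.
have fL := fun phi => Aux.lipc _ _ _ (cos phi) (sin phi) ck.
case: (pselect (exists t t', (th1 < t < th2 /\ ~ N0 t) /\ (th1 < t' < th2 /\ ~ N0 t') /\
   pi < `|ang t - ang t'|)) => [[t [t' [[tI tN] [[t'I t'N] lt]]]] | Hn].
  exists t, t'; split => //; [split; exact: inI | exact: goodD | exact: goodD | exact: ltW].
have H : forall t t', th1 < t < th2 -> ~ N0 t -> th1 < t' < th2 -> ~ N0 t' ->
    `|ang t - ang t'| <= pi.
  move=> t t' tI tN t'I t'N; rewrite leNgt; apply/negP => h; apply: Hn.
  by exists t, t'.
have [t0 [t0I t0N]] := exists_good _ N0 th1 th2 nN0 th12.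
pose A := [set ang t | t in [set t | th1 < t < th2 /\ ~ N0 t]].
have hA : has_sup A.
  split; first by exists (ang t0), t0.
  exists (2 * pi) => _ [t [tI tN] <-].
  by have [_ [_ [_ /andP[_ /ltW]]]] := angP t tI tN.
pose M := sup A.
have Mge : forall t, th1 < t < th2 -> ~ N0 t -> ang t <= M.
  by move=> t tI tN; apply: (ub_le_sup hA.2); exists t.
have Mle : forall t, th1 < t < th2 -> ~ N0 t -> M - pi <= ang t.
  move=> t tI tN.
  rewrite lerBlDr; apply: ge_sup; first exact: hA.1.
  move=> _ [t' [t'I t'N] <-].
  have := H t' t t'I t'N tI tN.
  by move=> /(le_trans (ler_norm _)); rewrite lerBlDr addrC.
pose phi := M - pi / 2.
have bnd : forall t, th1 < t < th2 -> ~ N0 t -> - (pi / 2) <= ang t - phi <= pi / 2.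
  move=> t tI tN; have := Mge t tI tN; have := Mle t tI tN.
  by move=> h1 h2; apply: bnd_aux.
pose f := fun x => cos phi * (c x).1 + sin phi * (c x).2.
have fD0 : forall t, th1 < t < th2 -> ~ N0 t -> derivable f t 1 /\ 0 <= 'D_1 f t.
  move=> t tI tN; have [df Df] := fder phi t tI tN.
  split => //; rewrite Df; apply: mulr_ge0.
    by have [/ltW] := angP t tI tN.
  exact: cos_ge0_pihalf (bnd t tI tN).
have fconst : forall x, th1 <= x <= th2 -> f x = f th1.
  move=> x /andP[x1 x2].
  have h1 := nondecr _ _ _ _ _ _ th1 x (fL phi) nN0 fD0 (lexx th1) x1 x2.
  have h2 := nondecr _ _ _ _ _ _ x th2 (fL phi) nN0 fD0 x1 x2 (lexx th2).
  have h3 : f th2 = f th1 by rewrite /f ceq.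
  rewrite /f in h1 h2 h3 *; lra.
have cos0' : forall t, th1 < t < th2 -> ~ N0 t -> cos (ang t - phi) = 0.
  move=> t tI tN; apply/eqP; rewrite eq_le cos_ge0_pihalf ?bnd // andbT.
  rewrite leNgt; apply/negP => cpos.
  have [df Df] := fder phi t tI tN.
  have Dpos : 0 < 'D_1 f t.
    by rewrite /f Df mulr_gt0 //; have [] := angP t tI tN.
  move: (tI) => /andP[t1 t2].
  have [h [/andP[h0 hb]] fth] := pos_deriv _ f t df Dpos (th2 - t) (ltac:(lra)).
  rewrite (fconst t) ?(fconst (t + h)) in fth; last 2 first.
  - by apply/andP; split; lra.
  - by apply/andP; split; lra.
  by rewrite ltxx in fth.
have sides : forall t, th1 < t < th2 -> ~ N0 t ->
    ang t = phi + pi / 2 \/ ang t = phi - pi / 2.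
  move=> t tI tN; have /andP[b1 b2] := bnd t tI tN.
  move: b1; rewrite le_eqVlt => /orP[/eqP b1|b1].
    by right; lra.
  move: b2; rewrite le_eqVlt => /orP[/eqP b2|b2].
    by left; lra.
  have := cos_gt0_pihalf (ltac:(apply/andP; split; eassumption) : - (pi / 2) < ang t - phi < pi / 2).
  by rewrite cos0' // ltxx.
have pi0 := pi_gt0 R.
case: (pselect (exists t1 t2, (th1 < t1 < th2 /\ ~ N0 t1) /\ (th1 < t2 < th2 /\ ~ N0 t2) /\
   ang t1 = phi + pi / 2 /\ ang t2 = phi - pi / 2)) => [[t1 [t2 [[t1I t1N] [[t2I t2N] [e1 e2]]]]] | Hn2].
  have ee : `|ang t1 - ang t2| = pi.
    by rewrite e1 e2 (_ : phi + pi / 2 - (phi - pi / 2) = pi) ?ger0_norm // ?ltW //; field.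
  exists t1, t2; split => //; [split; exact: inI | exact: goodD | exact: goodD | by rewrite ee |].
  move=> nseg; exfalso; apply: nseg.
  exact: (Aux.seg _ _ _ _ (f th1) _ _ ck (ltW th12) fconst).
have same : forall t, th1 < t < th2 -> ~ N0 t -> ang t = ang t0.
  move=> t tI tN.
  case: (sides t tI tN) => et; case: (sides t0 t0I t0N) => e0; try by rewrite et e0.
    by exfalso; apply: Hn2; exists t, t0.
  by exfalso; apply: Hn2; exists t0, t.
pose g := fun x => cos (ang t0) * (c x).1 + sin (ang t0) * (c x).2.
have gD : forall t, th1 < t < th2 -> ~ N0 t -> derivable g t 1 /\ 0 < 'D_1 g t.
  move=> t tI tN; have [dg Dg] := fder (ang t0) t tI tN.
  split => //; rewrite /g Dg same // subrr cos0 mulr1.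
  by have [] := angP t tI tN.
have := incr _ _ _ _ _ _ (fL (ang t0)) nN0 th12 gD.
by rewrite ceq ltxx.
Qed.
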